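(* Let $f:E\to\mathbb{R}$ be convex (or continuously differentiable and $1$-weakly-quasi-convex) with a minimizer $x_*$, let $\varepsilon>0$ and let $\Theta\ge V(x_*,x^0)$. Then the iterates of Algorithm UAGMsDR with accuracy $\varepsilon$ satisfy, for every $k\ge1$, $$f(x^k)-f(x_* )\le\frac{V(x_*,x^0)}{A_k}+\frac\varepsilon2.$$ Moreover, for every $\nu\in[0,1]$ with $M_\nu<\infty$ and every integer $$N\ge 2^{\frac{2+4\nu}{1+3\nu}}\left[\frac{1-\nu}{1+\nu}\right]^{\frac{1-\nu}{1+3\nu}}\left[\frac{M_\nu}{\varepsilon}\right]^{\frac{2}{1+3\nu}}\Theta^{\frac{1+\nu}{1+3\nu}}$$ (with the factor $\left[\frac{1-\nu}{1+\nu}\right]^{\frac{1-\nu}{1+3\nu}}$ interpreted as $1$ when $\nu=1$), one has $f(x^N)-f(x_* )\le\varepsilon$.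
   Context: $E$ is a finite-dimensional real vector space with a norm $\|\cdot\|$; $E^*$ is its dual, $\langle g,x\rangle$ denotes the value of $g\in E^*$ at $x\in E$, and $\|g\|_*=\max\{\langle g,x\rangle:\|x\|\le 1\}$. For $g\in E^*$, $g^{\#}$ denotes a (fixed) element $s\in E$ with $\|s\|\le 1$ and $\langle g,s\rangle=\|g\|_*$. A prox-function $d:E\to\mathbb{R}$ is continuously differentiable, convex, $1$-strongly convex with respect to $\|\cdot\|$ and satisfies $\min_E d=0$; its Bregman divergence is $V(x,z)=d(x)-d(z)-\langle\nabla d(z),x-z\rangle$. $\nabla f(x)$ denotes the gradient of $f$ if $f$ is differentiable and otherwise a subgradient of the convex function $f$ (as selected by the algorithm). For $\nu\in[0,1]$, $M_\nu\in(0,+\infty]$ denotes the smallest constant such that $\|\nabla f(x)-\nabla f(y)\|_*\le M_\nu\|x-y\|^\nu$ for all $x,y\in E$ ($M_\nu=+\infty$ if no such constant exists). A differentiable $f$ with minimizer $x_*$ is $1$-weakly-quasi-convex if $f(x)-f(x_* )\le\langle\nabla f(x),x-x_*\rangle$ for all $x$. Algorithm UAGMsDR (input $x^0\in E$, accuracy $\varepsilon>0$): set $A_0=0$, $v^0=x^0$, $\psi_0(x)=V(x,x^0)$. For $k=0,1,2,\dots$: 1. Choose $\beta_k\in\arg\min_{\beta\in[0,1]}f(v^k+\beta(x^k-v^k))$, set $y^k=v^k+\beta_k(x^k-v^k)$, and choose $\nabla f(y^k)$ (the gradient, or a subgradient in the convex nonsmooth case) such that $\langle\nabla f(y^k),v^k-y^k\rangle\ge0$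 (such a choice exists by optimality of $\beta_k$). 2. $h_{k+1}\in\arg\min_{h\ge0}f(y^k-h(\nabla f(y^k))^{\#})$, $x^{k+1}=y^k-h_{k+1}(\nabla f(y^k))^{\#}$; $a_{k+1}$ is the largest solution of $f(y^k)-\frac{a_{k+1}^2}{2(A_k+a_{k+1})}\|\nabla f(y^k)\|_*^2+\frac{\varepsilon a_{k+1}}{2(A_k+a_{k+1})}=f(x^{k+1})$. 3. $A_{k+1}=A_k+a_{k+1}$; $\psi_{k+1}(x)=\psi_k(x)+a_{k+1}\{f(y^k)+\langle\nabla f(y^k),x-y^k\rangle\}$; $v^{k+1}=\arg\min_{x\in E}\psi_{k+1}(x)$. All minima are assumed attained, and $\nabla f(y^k)\ne0$ for all iterations considered. *)

(* Defs.v *)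
From Stdlib Require Import Reals Lra.
From Stdlib Require Fin.
Open Scope R_scope.

(* E = R^n, represented as functions on Fin.t n; E^* is identified with R^n
   through the canonical pairing <g,x> = sum_i g_i x_i. *)
Definition E (n : nat) := Fin.t n -> R.

Fixpoint fsum (n : nat) : (Fin.t n -> R) -> R :=
  match n return (Fin.t n -> R) -> R with
  | O => fun _ => 0
  | S m => fun u => u (@Fin.F1 m) + fsum m (fun i => u (Fin.FS i))
  end.

Definition pair {n} (g x : E n) : R := fsum n (fun i => g i * x i).
Definition vadd {n} (x y : E n) : E n := fun i => x i + y i.
Definition vsub {n} (x y : E n) : E n := fun i => x i - y i.
Definition vscal {n} (c : R) (x : E n) : E n := fun i => c * x i.
Definition vzero {n} : E n := fun _ => 0.

Definition is_norm {n} (nrm : E n -> R) : Prop :=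
  (forall x, 0 <= nrm x) /\
  (forall x, nrm x = 0 -> x = vzero) /\
  (forall c x, nrm (vscal c x) = Rabs c * nrm x) /\
  (forall x y, nrm (vadd x y) <= nrm x + nrm y).

Definition is_sharp_map {n} (nrm : E n -> R) (sh : E n -> E n) : Prop :=
  forall g, nrm (sh g) <= 1 /\ (forall z, nrm z <= 1 -> pair g z <= pair g (sh g)).

Definition dnorm {n} (sh : E n -> E n) (g : E n) : R := pair g (sh g).

(* real power with the conventions 0^0 = 1 and 0^a = 0 for a > 0 *)
Definition rpow (x a : R) : R :=
  if Req_EM_T x 0 then (if Req_EM_T a 0 then 1 else 0) else Rpower x a.

Definition frechet {n} (nrm : E n -> R) (F : E n -> R) (x G : E n) : Prop :=
  forall eps, 0 < eps -> exists delta, 0 < delta /\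
    forall hh, nrm hh < delta ->
      Rabs (F (vadd x hh) - F x - pair G hh) <= eps * nrm hh.

Definition cont_diff {n} (nrm : E n -> R) (sh : E n -> E n) (F : E n -> R) (G : E n -> E n) : Prop :=
  (forall x, frechet nrm F x (G x)) /\
  (forall x eps, 0 < eps -> exists delta, 0 < delta /\
     forall z, nrm (vsub z x) < delta -> dnorm sh (vsub (G z) (G x)) < eps).

Definition convex {n} (F : E n -> R) : Prop :=
  forall x z t, 0 <= t <= 1 ->
    F (vadd (vscal t x) (vscal (1 - t) z)) <= t * F x + (1 - t) * F z.

Definition is_subgrad {n} (F : E n -> R) (x g : E n) : Prop :=
  forall z, F x + pair g (vsub z x) <= F z.

Definition is_minimizer {n} (F : E n -> R) (xs : E n) : Prop :=
  forall z, F xs <= F z.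

Definition weakly_quasi_convex1 {n} (F : E n -> R) (G : E n -> E n) (xs : E n) : Prop :=
  forall x, F x - F xs <= pair (G x) (vsub x xs).

Definition is_prox {n} (nrm : E n -> R) (sh : E n -> E n) (d : E n -> R) (gd : E n -> E n) : Prop :=
  cont_diff nrm sh d gd /\ convex d /\
  (forall x z, d x + pair (gd x) (vsub z x) + / 2 * (nrm (vsub z x))^2 <= d z) /\
  (exists x, d x = 0) /\ (forall x, 0 <= d x).

Definition Breg {n} (d : E n -> R) (gd : E n -> E n) (x z : E n) : R :=
  d x - d z - pair (gd z) (vsub x z).

(* Holder condition for the (sub)gradient relation D (D x g : g is nabla f(x)) *)
Definition holder {n} (nrm : E n -> R) (sh : E n -> E n) (D : E n -> E n -> Prop)
  (nu M : R) : Prop :=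
  forall x z gx gz, D x gx -> D z gz ->
    dnorm sh (vsub gx gz) <= M * rpow (nrm (vsub x z)) nu.

Definition is_M_nu {n} (nrm : E n -> R) (sh : E n -> E n) (D : E n -> E n -> Prop)
  (nu M : R) : Prop :=
  holder nrm sh D nu M /\ (forall M', holder nrm sh D nu M' -> M <= M').

Fixpoint psi {n} (d : E n -> R) (gd : E n -> E n) (f : E n -> R) (x0 : E n)
  (y g : nat -> E n) (a : nat -> R) (k : nat) (z : E n) : R :=
  match k with
  | O => Breg d gd z x0
  | S k' => psi d gd f x0 y g a k' z + a (S k') * (f (y k') + pair (g k') (vsub z (y k')))
  end.

Definition a_equation {n} (sh : E n -> E n) (f : E n -> R) (eps Ak : R)
  (yk gk xk1 : E n) (t : R) : Prop :=
  Ak + t <> 0 /\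
  f yk - t ^ 2 / (2 * (Ak + t)) * (dnorm sh gk) ^ 2 + eps * t / (2 * (Ak + t)) = f xk1.

(* the iterates of Algorithm UAGMsDR; g k is the chosen nabla f(y^k) *)
Definition UAGMsDR {n} (sh : E n -> E n) (f : E n -> R) (D : E n -> E n -> Prop)
  (d : E n -> R) (gd : E n -> E n) (eps : R) (x0 : E n)
  (x v y g : nat -> E n) (beta h a A : nat -> R) : Prop :=
  x O = x0 /\ v O = x0 /\ A O = 0 /\
  forall k,
    (0 <= beta k <= 1 /\
     (forall b, 0 <= b <= 1 ->
        f (vadd (v k) (vscal (beta k) (vsub (x k) (v k)))) <=
        f (vadd (v k) (vscal b (vsub (x k) (v k))))) /\
     y k = vadd (v k) (vscal (beta k) (vsub (x k) (v k))) /\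
     D (y k) (g k) /\ 0 <= pair (g k) (vsub (v k) (y k))) /\
    (0 <= h (S k) /\
     (forall t, 0 <= t ->
        f (vsub (y k) (vscal (h (S k)) (sh (g k)))) <= f (vsub (y k) (vscal t (sh (g k))))) /\
     x (S k) = vsub (y k) (vscal (h (S k)) (sh (g k))) /\
     a_equation sh f eps (A k) (y k) (g k) (x (S k)) (a (S k)) /\
     (forall t, a_equation sh f eps (A k) (y k) (g k) (x (S k)) t -> t <= a (S k))) /\
    (A (S k) = A k + a (S k) /\
     forall z, psi d gd f x0 y g a (S k) (v (S k)) <= psi d gd f x0 y g a (S k) z).

Definition N_bound (nu M eps Theta : R) : R :=
  Rpower 2 ((2 + 4 * nu) / (1 + 3 * nu)) *
  rpow ((1 - nu) / (1 + nu)) ((1 - nu) / (1 + 3 * nu)) *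
  rpow (M / eps) (2 / (1 + 3 * nu)) *
  rpow Theta ((1 + nu) / (1 + 3 * nu)).

(* Main.v *)
Require Import Defs.
From Stdlib Require Import Reals Lra Psatz FunctionalExtensionality ClassicalEpsilon Classical.
Open Scope R_scope.

Lemma vext {n} (x y : E n) : (forall i, x i = y i) -> x = y.
Proof. intros; apply functional_extensionality; auto. Qed.

Ltac veq := apply vext; intro; unfold vadd, vsub, vscal, vzero; try ring.

Lemma fsum_ext n (u w : Fin.t n -> R) : (forall i, u i = w i) -> fsum n u = fsum n w.
Proof. induction n; simpl; intros; auto. rewrite H. f_equal. apply IHn. auto. Qed.

Lemma fsum_plus n (u w : Fin.t n -> R) : fsum n (fun i => u i + w i) = fsum n u + fsum n w.
Proof. induction n; simpl; intros. ring. rewrite IHn. ring. Qed.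

Lemma fsum_scal n c (u : Fin.t n -> R) : fsum n (fun i => c * u i) = c * fsum n u.
Proof. induction n; simpl; intros. ring. rewrite IHn. ring. Qed.

Lemma fsum_0 n : fsum n (fun _ => 0) = 0.
Proof. induction n; simpl; intros. ring. rewrite IHn. ring. Qed.

Lemma fsum_nonneg n (u : Fin.t n -> R) : (forall i, 0 <= u i) -> 0 <= fsum n u.
Proof. induction n; simpl; intros. lra. pose proof (H Fin.F1). pose proof (IHn (fun i => u (Fin.FS i))). simpl in H1.
  assert (0 <= fsum n (fun i => u (Fin.FS i))) by (apply H1; auto). lra. Qed.

Lemma fsum_pos n (u : Fin.t n -> R) : (forall i, 0 <= u i) -> forall i, 0 < u i -> 0 < fsum n u.
Proof. induction n; intros H i. inversion i. simpl.
  pose proof (fsum_nonneg n (fun i => u (Fin.FS i)) (fun i => H (Fin.FS i))).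
  pose proof (H Fin.F1).
  apply (Fin.caseS' i (fun i => 0 < u i -> _)).
  - intros; lra.
  - intros q Hq. pose proof (IHn (fun i => u (Fin.FS i)) (fun i => H (Fin.FS i)) q Hq). lra.
Qed.

Section P.
Context {n : nat}.
Implicit Types g h x y z w : E n.

Lemma pair_add_r g x y : pair g (vadd x y) = pair g x + pair g y.
Proof. unfold pair, vadd. rewrite <- fsum_plus. apply fsum_ext; intros; ring. Qed.
Lemma pair_sub_r g x y : pair g (vsub x y) = pair g x - pair g y.
Proof. unfold pair, vsub. replace (fsum n (fun i => g i * x i) - fsum n (fun i => g i * y i))
  with (fsum n (fun i => g i * x i) + (-1) * fsum n (fun i => g i * y i)) by ring.
  rewrite <- fsum_scal, <- fsum_plus. apply fsum_ext; intros; ring. Qed.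
Lemma pair_scal_r g c x : pair g (vscal c x) = c * pair g x.
Proof. unfold pair, vscal. rewrite <- fsum_scal. apply fsum_ext; intros; ring. Qed.
Lemma pair_add_l g h x : pair (vadd g h) x = pair g x + pair h x.
Proof. unfold pair, vadd. rewrite <- fsum_plus. apply fsum_ext; intros; ring. Qed.
Lemma pair_sub_l g h x : pair (vsub g h) x = pair g x - pair h x.
Proof. unfold pair, vsub. replace (fsum n (fun i => g i * x i) - fsum n (fun i => h i * x i))
  with (fsum n (fun i => g i * x i) + (-1) * fsum n (fun i => h i * x i)) by ring.
  rewrite <- fsum_scal, <- fsum_plus. apply fsum_ext; intros; ring. Qed.
Lemma pair_zero_r g : pair g vzero = 0.
Proof. unfold pair, vzero. rewrite (fsum_ext n _ (fun _ => 0)). apply fsum_0. intros; ring. Qed.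
Lemma pair_self_pos g : g <> vzero -> 0 < pair g g.
Proof. intros H. assert (exists i, g i <> 0).
  { apply NNPP; intro C. apply H. apply vext. intro i. apply NNPP; intro C2. apply C; eauto. }
  destruct H0 as [i Hi]. unfold pair. apply (fsum_pos n _ (fun j => Rle_0_sqr (g j)) i).
  unfold Rsqr in *. nra. Qed.
End P.
Section N.
Context {n : nat} (nrm : E n -> R) (sh : E n -> E n) (Hn : is_norm nrm) (Hs : is_sharp_map nrm sh).
Implicit Types g h x y z w : E n.

Lemma nrm_nonneg x : 0 <= nrm x. Proof. apply Hn. Qed.
Lemma nrm_scal c x : nrm (vscal c x) = Rabs c * nrm x. Proof. apply Hn. Qed.
Lemma nrm_zero : nrm vzero = 0.
Proof. replace (@vzero n) with (vscal 0 (@vzero n)) by veq. rewrite nrm_scal, Rabs_R0. ring. Qed.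
Lemma nrm_eq0 x : nrm x = 0 -> x = vzero. Proof. apply Hn. Qed.
Lemma nrm_sub_sym x y : nrm (vsub x y) = nrm (vsub y x).
Proof. replace (vsub x y) with (vscal (-1) (vsub y x)) by veq. rewrite nrm_scal.
  replace (Rabs (-1)) with 1. ring. rewrite Rabs_left; lra. Qed.

Lemma dual_le h z : nrm z <= 1 -> pair h z <= dnorm sh h.
Proof. intros. apply (proj2 (Hs h)); auto. Qed.
Lemma dnorm_nonneg h : 0 <= dnorm sh h.
Proof. pose proof (dual_le h vzero). rewrite pair_zero_r in H. apply H. rewrite nrm_zero; lra. Qed.
Lemma pair_le_dn h w : pair h w <= dnorm sh h * nrm w.
Proof. destruct (Req_dec (nrm w) 0) as [E0|E0].
  - apply nrm_eq0 in E0. subst. rewrite pair_zero_r, nrm_zero. lra.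
  - pose proof (nrm_nonneg w). assert (P : 0 < nrm w) by lra.
    pose proof (dual_le h (vscal (/ nrm w) w)). rewrite pair_scal_r, nrm_scal in H0.
    rewrite Rabs_right in H0 by (left; apply Rinv_0_lt_compat; auto).
    rewrite Rinv_l in H0 by lra. specialize (H0 (Rle_refl _)).
    apply Rmult_le_reg_l with (/ nrm w). apply Rinv_0_lt_compat; auto.
    replace (/ nrm w * (dnorm sh h * nrm w)) with (dnorm sh h) by (field; lra). lra. Qed.
Lemma dnorm_pos g : g <> vzero -> 0 < dnorm sh g.
Proof. intros H. pose proof (pair_self_pos g H). pose proof (pair_le_dn g g).
  pose proof (dnorm_nonneg g). pose proof (nrm_nonneg g). nra. Qed.
Lemma sh_nrm g : nrm (sh g) <= 1. Proof. apply Hs. Qed.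
End N.
Section Prox.
Context {n : nat} (nrm : E n -> R) (sh : E n -> E n) (Hn : is_norm nrm)
  (d : E n -> R) (gd : E n -> E n) (Hp : is_prox nrm sh d gd).
Implicit Types g h x y z w v : E n.

Lemma dstrong x z : d x + pair (gd x) (vsub z x) + / 2 * (nrm (vsub z x))^2 <= d z.
Proof. apply Hp. Qed.
Lemma Breg_self x : Breg d gd x x = 0.
Proof. unfold Breg. replace (vsub x x) with (@vzero n) by veq. rewrite pair_zero_r. ring. Qed.
Lemma Breg_lb x z : / 2 * (nrm (vsub x z))^2 <= Breg d gd x z.
Proof. unfold Breg. pose proof (dstrong z x). lra. Qed.

Lemma d_strconv t z v : 0 <= t <= 1 ->
  d (vadd (vscal t z) (vscal (1 - t) v)) <=
  t * d z + (1 - t) * d v - t * (1 - t) / 2 * (nrm (vsub z v))^2.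
Proof. intros Ht. set (m := vadd (vscal t z) (vscal (1 - t) v)).
  pose proof (dstrong m z) as H1. pose proof (dstrong m v) as H2.
  replace (vsub z m) with (vscal (1 - t) (vsub z v)) in H1 by (unfold m; veq).
  replace (vsub v m) with (vscal (- t) (vsub z v)) in H2 by (unfold m; veq).
  rewrite pair_scal_r, (nrm_scal nrm Hn) in H1, H2.
  rewrite Rabs_right in H1 by lra. rewrite Rabs_Ropp, Rabs_right in H2 by lra.
  assert (A1 := Rmult_le_compat_l t _ _ (proj1 Ht) H1).
  assert (A2 := Rmult_le_compat_l (1 - t) _ _ ltac:(lra) H2).
  nra. Qed.
End Prox.
Section Aff.
Context {n : nat} (nrm : E n -> R) (sh : E n -> E n) (Hn : is_norm nrm)
  (d : E n -> R) (gd : E n -> E n) (Hp : is_prox nrm sh d gd).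
Implicit Types g h x y z w v : E n.

Lemma aff_strconv (c : E n) e (F : E n -> R) (HF : forall z, F z = d z + pair c z + e) t z v : 0 <= t <= 1 ->
  F (vadd (vscal t z) (vscal (1 - t) v)) <=
  t * F z + (1 - t) * F v - t * (1 - t) / 2 * (nrm (vsub z v))^2.
Proof. intros Ht. rewrite !HF, pair_add_r, !pair_scal_r.
  pose proof (d_strconv nrm sh Hn d gd Hp t z v Ht). nra. Qed.

Lemma aff_min (c : E n) e (F : E n -> R) (HF : forall z, F z = d z + pair c z + e) v :
  (forall z, F v <= F z) -> forall z, F v + / 2 * (nrm (vsub z v))^2 <= F z.
Proof. intros Hmin z. apply Rnot_lt_le. intro C.
  set (N := nrm (vsub z v)) in *.
  set (gap := F v + / 2 * N ^ 2 - F z).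
  assert (Hg : 0 < gap) by (unfold gap; lra).
  pose proof (Hmin z).
  assert (HN : 0 < N ^ 2) by (unfold gap in *; lra).
  set (t := gap / N ^ 2).
  assert (Ht0 : 0 < t) by (unfold t; apply Rdiv_lt_0_compat; lra).
  assert (Ht1 : t <= 1 / 2).
  { unfold t. apply Rmult_le_reg_r with (N ^ 2); auto. unfold Rdiv. rewrite Rmult_assoc, Rinv_l by lra. unfold gap in *. lra. }
  pose proof (aff_strconv c e F HF t z v ltac:(lra)).
  pose proof (Hmin (vadd (vscal t z) (vscal (1 - t) v))).
  assert (t * F v <= t * F z - t * (1 - t) / 2 * N ^ 2) by (unfold N; lra).
  assert (F v <= F z - (1 - t) / 2 * N ^ 2).
  { apply Rmult_le_reg_l with t; auto. nra. }
  assert (gap <= t * N ^ 2 / 2) by (unfold gap; lra).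
  assert (t * N ^ 2 = gap) by (unfold t; field; intro; subst; nra).
  lra. Qed.

Lemma psi_aff (f : E n -> R) x0 (yy gg : nat -> E n) (a : nat -> R) k :
  exists c e, forall z, psi d gd f x0 yy gg a k z = d z + pair c z + e.
Proof. induction k.
  - exists (vscal (-1) (gd x0)), (- d x0 + pair (gd x0) x0). intros z. simpl. unfold Breg.
    rewrite pair_sub_r. unfold pair, vscal.
    replace (fsum n (fun i => -1 * gd x0 i * z i)) with (-1 * fsum n (fun i => gd x0 i * z i)).
    ring. rewrite <- fsum_scal. apply fsum_ext; intros; ring.
  - destruct IHk as [c [e H]]. exists (vadd c (vscal (a (S k)) (gg k))),
      (e + a (S k) * (f (yy k) - pair (gg k) (yy k))). intros z. simpl. rewrite H.
    rewrite pair_add_l, pair_sub_r. replace (pair (vscal (a (S k)) (gg k)) z) with (a (S k) * pair (gg k) z).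
    ring. unfold pair, vscal. rewrite <- fsum_scal. apply fsum_ext; intros; ring.
Qed.
End Aff.
Lemma rpow_pos_eq x c : 0 < x -> rpow x c = Rpower x c.
Proof. intros. unfold rpow. destruct (Req_EM_T x 0); [lra|auto]. Qed.
Lemma rpow_nonneg x c : 0 <= rpow x c.
Proof. unfold rpow, Rpower. destruct (Req_EM_T x 0); [destruct (Req_EM_T c 0); lra|].
  left; apply exp_pos. Qed.
Lemma rpow_x0 x : rpow x 0 = 1.
Proof. unfold rpow, Rpower. destruct (Req_EM_T x 0); [destruct (Req_EM_T 0 0); lra|].
  rewrite Rmult_0_l, exp_0. auto. Qed.
Lemma rpow_0c c : 0 < c -> rpow 0 c = 0.
Proof. intros. unfold rpow. destruct (Req_EM_T 0 0); [destruct (Req_EM_T c 0); lra| lra]. Qed.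
Lemma rpow_mono x y c : 0 <= c -> 0 <= x <= y -> rpow x c <= rpow y c.
Proof. intros Hc Hxy. destruct (Req_dec c 0) as [->|Hc0]. rewrite !rpow_x0; lra.
  destruct (Req_dec x 0) as [->|Hx0]. rewrite rpow_0c by lra. apply rpow_nonneg.
  rewrite !rpow_pos_eq by lra. apply Rle_Rpower_l; lra. Qed.

Lemma ln_le_sub1 z : 0 < z -> ln z <= z - 1.
Proof. intros. pose proof (exp_ineq1_le (ln z)). rewrite exp_ln in H0; lra. Qed.

(* convexity of tau^(1+nu) *)
Lemma cvx_pow nu al be : 0 <= nu <= 1 -> 0 <= al < be ->
  (1 + nu) * (be - al) * rpow al nu <= be * rpow be nu - al * rpow al nu.
Proof. intros Hnu Hab. destruct (Req_dec al 0) as [->|Ha0].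
  - destruct (Req_dec nu 0) as [->|Hn0].
    + rewrite !rpow_x0. lra.
    + rewrite rpow_0c by lra. pose proof (rpow_nonneg be nu). nra.
  - rewrite !rpow_pos_eq by lra. unfold Rpower.
    assert (Hl : 1 - al / be <= ln be - ln al).
    { pose proof (ln_le_sub1 (al / be) ltac:(apply Rdiv_lt_0_compat; lra)).
      unfold Rdiv in H. rewrite ln_mult, ln_Rinv in H by (try apply Rinv_0_lt_compat; lra). lra. }
    replace (nu * ln be) with (nu * ln al + nu * (ln be - ln al)) by ring.
    rewrite exp_plus. pose proof (exp_ineq1_le (nu * (ln be - ln al))).
    pose proof (exp_pos (nu * ln al)).
    assert (1 + nu * (1 - al / be) <= exp (nu * (ln be - ln al))).
    { assert (nu * (1 - al / be) <= nu * (ln be - ln al)) by (apply Rmult_le_compat_l; lra). lra. }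
    set (X := exp (nu * ln al)) in *. set (Y := exp (nu * (ln be - ln al))) in *.
    assert (be * (1 + nu * (1 - al / be)) = be + nu * (be - al)) by (field; lra).
    assert (be * (1 + nu * (1 - al / be)) <= be * Y) by (apply Rmult_le_compat_l; lra).
    nra.
Qed.

Lemma descent_real (phi : R -> R) (Gd M nu t : R) : 0 <= M -> 0 <= nu <= 1 -> 0 <= t ->
  (forall al be, 0 <= al < be -> phi be - phi al <= (be - al) * (- Gd + M * rpow be nu)) ->
  phi t <= phi 0 - t * Gd + M * (t * rpow t nu) / (1 + nu).
Proof. intros HM Hnu Ht SB.
  set (psi' := fun tau => phi tau + tau * Gd - M * (tau * rpow tau nu) / (1 + nu)).
  assert (Hstep : forall al be, 0 <= al < be -> psi' be - psi' al <= M * (be - al) * (rpow be nu - rpow al nu)).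
  { intros al be Hab. unfold psi'. pose proof (SB al be Hab). pose proof (cvx_pow nu al be Hnu Hab).
    assert (M * ((1 + nu) * (be - al) * rpow al nu) <= M * (be * rpow be nu - al * rpow al nu)) by (apply Rmult_le_compat_l; lra).
    assert (M * (be * rpow be nu - al * rpow al nu) / (1 + nu) >= M * (be - al) * rpow al nu).
    { apply Rle_ge. apply Rmult_le_reg_r with (1 + nu). lra. replace (M * (be * rpow be nu - al * rpow al nu) / (1 + nu) * (1 + nu)) with (M * (be * rpow be nu - al * rpow al nu)) by (field; lra). nra. }
    unfold Rdiv in *. nra. }
  destruct (Req_dec t 0) as [->|Ht0]. { rewrite Rmult_0_l. lra. }
  assert (Hall : forall m : nat, (1 <= m)%nat -> psi' t - psi' 0 <= M * (t / INR m) * rpow t nu).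
  { intros m Hm. assert (Hmp : 0 < INR m) by (apply lt_0_INR; lia). set (hh := t / INR m).
    assert (Hh : 0 < hh) by (unfold hh; apply Rdiv_lt_0_compat; lra).
    assert (forall j : nat, psi' (INR j * hh) - psi' 0 <= M * hh * (rpow (INR j * hh) nu - rpow 0 nu)).
    { induction j. simpl. rewrite Rmult_0_l. lra.
      pose proof (Hstep (INR j * hh) (INR (S j) * hh)). rewrite S_INR in *.
      assert (0 <= INR j) by apply pos_INR.
      assert (Hs2 : psi' ((INR j + 1) * hh) - psi' (INR j * hh) <= M * ((INR j + 1) * hh - INR j * hh) *
            (rpow ((INR j + 1) * hh) nu - rpow (INR j * hh) nu)) by (apply H; split; nra).
      replace ((INR j + 1) * hh - INR j * hh) with hh in Hs2 by ring. nra. }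
    specialize (H m). replace (INR m * hh) with t in H by (unfold hh; field; lra).
    pose proof (rpow_nonneg 0 nu). assert (0 <= M * hh) by nra. nra. }
  assert (psi' t - psi' 0 <= 0).
  { apply Rnot_lt_le. intro C. set (K := M * t * rpow t nu). set (Q := psi' t - psi' 0) in *.
    destruct (archimed (K / Q)) as [Hup _].
    set (m := Z.to_nat (up (K / Q))).
    assert (HK : 0 <= K) by (unfold K; pose proof (rpow_nonneg t nu); apply Rmult_le_pos; [apply Rmult_le_pos|]; lra).
    assert (Hz : (0 < up (K / Q))%Z).
    { apply lt_IZR. assert (0 <= K / Q) by (unfold Rdiv; apply Rmult_le_pos; [lra| left; apply Rinv_0_lt_compat; lra]). lra. }
    assert (Hm : INR m = IZR (up (K / Q))) by (unfold m; rewrite INR_IZR_INZ, Znat.Z2Nat.id; auto; lia).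
    assert (Hm1 : (1 <= m)%nat) by (unfold m; lia).
    pose proof (Hall m Hm1). rewrite Hm in H.
    set (U := IZR (up (K / Q))) in *.
    assert (HU0 : 0 < U) by (apply IZR_lt in Hz; auto).
    assert (K < U * Q).
    { apply Rmult_lt_reg_r with (/ Q). apply Rinv_0_lt_compat; lra.
      rewrite Rmult_assoc, Rinv_r by lra. lra. }
    assert (M * (t / U) * rpow t nu = K / U) by (unfold K; field; lra).
    rewrite H1 in H. assert (U * Q <= K).
    { apply Rmult_le_reg_r with (/ U). apply Rinv_0_lt_compat; lra. rewrite (Rmult_comm U), Rmult_assoc, Rinv_r by lra. lra. }
    lra. }
  unfold psi' in H. rewrite Rmult_0_l, Rmult_0_l, Rmult_0_r in H. unfold Rdiv in *. lra.
Qed.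
Section Smooth.
Context {n : nat} (nrm : E n -> R) (sh : E n -> E n) (Hn : is_norm nrm).

Lemma phi_deriv (f : E n -> R) gf (Hfr : forall p, frechet nrm f p (gf p)) (y s : E n) (Hs1 : nrm s <= 1) tau :
  derivable_pt_lim (fun t => f (vsub y (vscal t s))) tau (- pair (gf (vsub y (vscal tau s))) s).
Proof. intros eps Heps. set (p := vsub y (vscal tau s)).
  destruct (Hfr p (eps / 2) ltac:(lra)) as [dl [Hdl Hd]].
  exists (mkposreal dl Hdl). intros hh Hh0 Hhd. simpl in Hhd.
  assert (Hv : vsub y (vscal (tau + hh) s) = vadd p (vscal (- hh) s)) by (unfold p; veq).
  rewrite Hv. specialize (Hd (vscal (- hh) s)).
  rewrite (nrm_scal nrm Hn), Rabs_Ropp, pair_scal_r in Hd.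
  pose proof (nrm_nonneg nrm Hn s). pose proof (Rabs_pos hh).
  assert (Rabs hh * nrm s < dl) by nra. specialize (Hd H1).
  assert (Hha : 0 < Rabs hh) by (apply Rabs_pos_lt; auto).
  replace ((f (vadd p (vscal (- hh) s)) - f p) / hh - - pair (gf p) s) with
    ((f (vadd p (vscal (- hh) s)) - f p - - hh * pair (gf p) s) / hh) by (field; auto).
  unfold Rdiv. rewrite Rabs_mult, Rabs_inv.
  apply Rle_lt_trans with (eps / 2 * (Rabs hh * nrm s) * / Rabs hh).
  apply Rmult_le_compat_r. left; apply Rinv_0_lt_compat; auto. auto.
  replace (eps / 2 * (Rabs hh * nrm s) * / Rabs hh) with (eps / 2 * nrm s) by (field; lra). nra.
Qed.
End Smooth.
Lemma glb_exists (P : R -> Prop) (F : R -> R) (B : R) :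
  (exists t, P t) -> (forall t, P t -> B <= F t) ->
  exists r, (forall t, P t -> r <= F t) /\ (forall r', (forall t, P t -> r' <= F t) -> r' <= r).
Proof. intros [t0 Ht0] HB.
  set (S := fun z => exists t, P t /\ z = - F t).
  assert (Hb : bound S). { exists (- B). intros z [t [Pt ->]]. pose proof (HB t Pt). lra. }
  assert (He : exists z, S z) by (exists (- F t0); exists t0; auto).
  destruct (completeness S Hb He) as [l [Hub Hl]].
  exists (- l). split.
  - intros t Pt. assert (S (- F t)) by (exists t; auto). pose proof (Hub _ H). lra.
  - intros r' Hr'. assert (is_upper_bound S (- r')).
    { intros z [t [Pt ->]]. pose proof (Hr' t Pt). lra. }
    pose proof (Hl _ H). lra.
Qed.

Definition vcons {m} (c0 : R) (c : E m) : E (S m) := fun i => Fin.caseS' i (fun _ => R) c0 c.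
Definition vtail {m} (w : E (S m)) : E m := fun i => w (Fin.FS i).

Lemma vcons_eta {m} (w : E (S m)) : w = vcons (w Fin.F1) (vtail w).
Proof. apply vext. intro i. apply (Fin.caseS' i); reflexivity. Qed.
Lemma pair_cons {m} c0 (c : E m) t u : pair (vcons c0 c) (vcons t u) = c0 * t + pair c u.
Proof. reflexivity. Qed.
Lemma vadd_cons {m} t1 (u1 : E m) t2 u2 : vadd (vcons t1 u1) (vcons t2 u2) = vcons (t1 + t2) (vadd u1 u2).
Proof. apply vext. intro i. apply (Fin.caseS' i); reflexivity. Qed.
Lemma vscal_cons {m} l t (u : E m) : vscal l (vcons t u) = vcons (l * t) (vscal l u).
Proof. apply vext. intro i. apply (Fin.caseS' i); reflexivity. Qed.
Lemma vzero_cons {m} : (@vzero (S m)) = vcons 0 vzero.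
Proof. apply vext. intro i. apply (Fin.caseS' i); reflexivity. Qed.

Lemma sublin_q0 {m} (q : E m -> R) :
  (forall l w, 0 < l -> q (vscal l w) <= l * q w) -> 0 <= q vzero.
Proof. intros Hh. pose proof (Hh 2 vzero ltac:(lra)). replace (vscal 2 (@vzero m)) with (@vzero m) in H by veq. lra. Qed.

Lemma sublin_inv {m} (q : E m -> R) (Hh : forall l w, 0 < l -> q (vscal l w) <= l * q w) l w :
  0 < l -> l * q w <= q (vscal l w).
Proof. intros Hl. pose proof (Hh (/ l) (vscal l w) ltac:(apply Rinv_0_lt_compat; lra)).
  replace (vscal (/ l) (vscal l w)) with w in H by (veq; field; lra).
  apply Rmult_le_reg_l with (/ l). apply Rinv_0_lt_compat; lra.
  rewrite <- Rmult_assoc, Rinv_l, Rmult_1_l by lra. auto. Qed.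

Lemma hahn_banach m : forall (q : E m -> R),
  (forall w1 w2, q (vadd w1 w2) <= q w1 + q w2) ->
  (forall l w, 0 < l -> q (vscal l w) <= l * q w) ->
  exists c, forall w, pair c w <= q w.
Proof. induction m; intros q Ha Hh.
  - exists vzero. intros w. replace w with (@vzero 0) by (apply vext; intro i; inversion i).
    unfold pair. simpl. apply sublin_q0; auto.
  - set (c0 := q (vcons 1 vzero)).
    assert (F1 : forall t, c0 * t <= q (vcons t vzero)).
    { intro t. destruct (Rtotal_order t 0) as [Hlt|[Heq|Hgt]].
      + pose proof (Ha (vcons 1 vzero) (vcons (-1) vzero)). rewrite vadd_cons in H.
        replace (1 + -1) with 0 in H by ring. replace (vadd (@vzero m) vzero) with (@vzero m) in H by veq.
        rewrite <- vzero_cons in H. pose proof (sublin_q0 q Hh).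
        pose proof (sublin_inv q Hh (- t) (vcons (-1) vzero) ltac:(lra)).
        rewrite vscal_cons in H1. replace (- t * -1) with t in H1 by ring.
        replace (vscal (- t) (@vzero m)) with (@vzero m) in H1 by veq. unfold c0. nra.
      + subst. rewrite <- vzero_cons. pose proof (sublin_q0 q Hh). lra.
      + pose proof (sublin_inv q Hh t (vcons 1 vzero) Hgt). rewrite vscal_cons in H.
        replace (t * 1) with t in H by ring. replace (vscal t (@vzero m)) with (@vzero m) in H by veq.
        unfold c0. lra. }
    assert (LB : forall t u, - q (vcons 0 (vscal (-1) u)) <= q (vcons t u) - c0 * t).
    { intros t u. pose proof (Ha (vcons t u) (vcons 0 (vscal (-1) u))). rewrite vadd_cons in H.
      replace (t + 0) with t in H by ring. replace (vadd u (vscal (-1) u)) with (@vzero m) in H by veq.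
      pose proof (F1 t). lra. }
    assert (Hex : forall u, exists r, (forall t, True -> r <= q (vcons t u) - c0 * t) /\
        (forall r', (forall t, True -> r' <= q (vcons t u) - c0 * t) -> r' <= r)).
    { intro u. apply glb_exists with (- q (vcons 0 (vscal (-1) u))). exists 0; auto. intros; apply LB. }
    set (q' := fun u => proj1_sig (constructive_indefinite_description _ (Hex u))).
    assert (Hq' : forall u, (forall t, q' u <= q (vcons t u) - c0 * t) /\
        (forall r', (forall t, r' <= q (vcons t u) - c0 * t) -> r' <= q' u)).
    { intro u. unfold q'. destruct (constructive_indefinite_description _ (Hex u)) as [r [H1 H2]]. simpl.
      split; intros; auto. }
    destruct (IHm q') as [c' Hc'].
    + intros u1 u2. destruct (Hq' (vadd u1 u2)) as [A1 _]. destruct (Hq' u1) as [_ B1]. destruct (Hq' u2) as [_ B2].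
      cut (q' (vadd u1 u2) - q' u2 <= q' u1). lra.
      apply B1. intro t1. cut (q' (vadd u1 u2) - (q (vcons t1 u1) - c0 * t1) <= q' u2). lra.
      apply B2. intro t2. pose proof (A1 (t1 + t2)). pose proof (Ha (vcons t1 u1) (vcons t2 u2)).
      rewrite vadd_cons in H0. lra.
    + intros l u Hl. destruct (Hq' (vscal l u)) as [A1 _]. destruct (Hq' u) as [_ B1].
      cut (q' (vscal l u) / l <= q' u). intro. apply Rmult_le_reg_l with (/ l). apply Rinv_0_lt_compat; lra.
      rewrite <- Rmult_assoc, Rinv_l, Rmult_1_l by lra. unfold Rdiv in H. rewrite Rmult_comm. auto.
      apply B1. intro t. pose proof (A1 (l * t)). pose proof (Hh l (vcons t u) Hl). rewrite vscal_cons in H0.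
      apply Rmult_le_reg_l with l. auto. replace (l * (q' (vscal l u) / l)) with (q' (vscal l u)) by (field; lra). nra.
    + exists (vcons c0 c'). intro w. rewrite (vcons_eta w). rewrite pair_cons.
      pose proof (Hc' (vtail w)). destruct (Hq' (vtail w)) as [A1 _]. pose proof (A1 (w Fin.F1)). lra.
Qed.
Section Subgrad.
Context {n : nat} (f : E n -> R) (Hc : convex f) (p : E n).

Let Q t w := (f (vadd p (vscal t w)) - f p) / t.

Lemma Q_lb t w : 0 < t -> f p - f (vadd p (vscal (-1) w)) <= Q t w.
Proof. intros Ht. unfold Q. pose proof (Hc (vadd p (vscal t w)) (vadd p (vscal (-1) w)) (/ (1 + t))
    ltac:(split; [left; apply Rinv_0_lt_compat; lra | apply Rmult_le_reg_l with (1 + t); [lra|]; rewrite Rinv_r by lra; lra])).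
  replace (vadd (vscal (/ (1 + t)) (vadd p (vscal t w))) (vscal (1 - / (1 + t)) (vadd p (vscal (-1) w)))) with p in H
    by (veq; field; lra).
  apply Rmult_le_reg_l with t; auto. replace (t * ((f (vadd p (vscal t w)) - f p) / t)) with (f (vadd p (vscal t w)) - f p) by (field; lra).
  assert (H' := Rmult_le_compat_l (1 + t) _ _ ltac:(lra) H). clear H. rename H' into H.
  replace ((1 + t) * (/ (1 + t) * f (vadd p (vscal t w)) + (1 - / (1 + t)) * f (vadd p (vscal (-1) w))))
    with (f (vadd p (vscal t w)) + t * f (vadd p (vscal (-1) w))) in H by (field; lra). nra. Qed.

Lemma Q_mono s t w : 0 < s <= t -> Q s w <= Q t w.
Proof. intros Hst. unfold Q. pose proof (Hc (vadd p (vscal t w)) p (s / t)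
    ltac:(split; [apply Rmult_le_pos; [lra| left; apply Rinv_0_lt_compat; lra] | apply Rmult_le_reg_l with t; [lra|]; field_simplify; lra])).
  replace (vadd (vscal (s / t) (vadd p (vscal t w))) (vscal (1 - s / t) p)) with (vadd p (vscal s w)) in H by (veq; field; lra).
  assert (f (vadd p (vscal s w)) - f p <= s / t * (f (vadd p (vscal t w)) - f p)) by nra.
  apply Rmult_le_reg_l with s; [lra|]. replace (s * ((f (vadd p (vscal s w)) - f p) / s)) with (f (vadd p (vscal s w)) - f p) by (field; lra).
  replace (s * ((f (vadd p (vscal t w)) - f p) / t)) with (s / t * (f (vadd p (vscal t w)) - f p)) by (field; lra). auto. Qed.

Lemma Q_mid s w1 w2 : 0 < s -> Q s (vadd w1 w2) <= Q (2 * s) w1 + Q (2 * s) w2.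
Proof. intros Hs. unfold Q. pose proof (Hc (vadd p (vscal (2 * s) w1)) (vadd p (vscal (2 * s) w2)) (/ 2) ltac:(lra)).
  replace (vadd (vscal (/ 2) (vadd p (vscal (2 * s) w1))) (vscal (1 - / 2) (vadd p (vscal (2 * s) w2)))) with
    (vadd p (vscal s (vadd w1 w2))) in H by (veq; field).
  apply Rmult_le_reg_l with s; [lra|].
  replace (s * ((f (vadd p (vscal s (vadd w1 w2))) - f p) / s)) with (f (vadd p (vscal s (vadd w1 w2))) - f p) by (field; lra).
  replace (s * ((f (vadd p (vscal (2 * s) w1)) - f p) / (2 * s) + (f (vadd p (vscal (2 * s) w2)) - f p) / (2 * s)))
   with (/ 2 * f (vadd p (vscal (2 * s) w1)) + (1 - / 2) * f (vadd p (vscal (2 * s) w2)) - f p) by (field; lra). lra. Qed.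

Lemma Q_homog t l w : 0 < t -> 0 < l -> Q (t / l) (vscal l w) = l * Q t w.
Proof. intros Ht Hl. unfold Q. replace (vscal (t / l) (vscal l w)) with (vscal t w) by (veq; field; lra). field; lra. Qed.

Lemma subgrad_exists : exists c, is_subgrad f p c.
Proof.
  assert (Hex : forall w, exists r, (forall t, 0 < t -> r <= Q t w) /\ (forall r', (forall t, 0 < t -> r' <= Q t w) -> r' <= r)).
  { intro w. apply glb_exists with (f p - f (vadd p (vscal (-1) w))). exists 1; lra. intros; apply Q_lb; auto. }
  set (q := fun w => proj1_sig (constructive_indefinite_description _ (Hex w))).
  assert (Hq : forall w, (forall t, 0 < t -> q w <= Q t w) /\ (forall r', (forall t, 0 < t -> r' <= Q t w) -> r' <= q w)).
  { intro w. unfold q. destruct (constructive_indefinite_description _ (Hex w)) as [r [H1 H2]]. simpl. split; auto. }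
  destruct (hahn_banach n q) as [c Hcq].
  - intros w1 w2. destruct (Hq (vadd w1 w2)) as [A1 _]. destruct (Hq w1) as [_ B1]. destruct (Hq w2) as [_ B2].
    cut (q (vadd w1 w2) - q w2 <= q w1). lra.
    apply B1. intros t1 Ht1. cut (q (vadd w1 w2) - Q t1 w1 <= q w2). lra.
    apply B2. intros t2 Ht2. set (s := Rmin t1 t2 / 2).
    assert (0 < s) by (unfold s, Rmin; destruct (Rle_dec t1 t2); lra).
    pose proof (A1 s H). pose proof (Q_mid s w1 w2 H).
    assert (2 * s <= t1 /\ 2 * s <= t2) by (unfold s; split; [apply Rle_trans with (Rmin t1 t2); [lra| apply Rmin_l] | apply Rle_trans with (Rmin t1 t2); [lra| apply Rmin_r]]).
    pose proof (Q_mono (2 * s) t1 w1 ltac:(lra)). pose proof (Q_mono (2 * s) t2 w2 ltac:(lra)). lra.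
  - intros l w Hl. destruct (Hq (vscal l w)) as [A1 _]. destruct (Hq w) as [_ B1].
    cut (q (vscal l w) / l <= q w). intro H. apply Rmult_le_reg_l with (/ l). apply Rinv_0_lt_compat; lra.
    rewrite <- Rmult_assoc, Rinv_l, Rmult_1_l by lra. unfold Rdiv in H. rewrite Rmult_comm. auto.
    apply B1. intros t Ht. pose proof (A1 (t / l) ltac:(apply Rdiv_lt_0_compat; lra)). rewrite Q_homog in H by lra.
    apply Rmult_le_reg_l with l. auto. replace (l * (q (vscal l w) / l)) with (q (vscal l w)) by (field; lra). auto.
  - exists c. intros z. pose proof (Hcq (vsub z p)). destruct (Hq (vsub z p)) as [A1 _]. pose proof (A1 1 ltac:(lra)).
    unfold Q in H0. replace (vadd p (vscal 1 (vsub z p))) with z in H0 by veq. lra.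
Qed.
End Subgrad.
Lemma exp_tangent u w : exp w * (1 + (u - w)) <= exp u.
Proof. replace u with (w + (u - w)) at 2 by ring. rewrite exp_plus.
  pose proof (exp_ineq1_le (u - w)). pose proof (exp_pos w). nra. Qed.

Lemma amgm u v al : 0 <= al <= 1 -> exp (al * u + (1 - al) * v) <= al * exp u + (1 - al) * exp v.
Proof. intros Hal. set (w := al * u + (1 - al) * v).
  pose proof (exp_tangent u w). pose proof (exp_tangent v w).
  assert (al * (exp w * (1 + (u - w))) <= al * exp u) by (apply Rmult_le_compat_l; lra).
  assert ((1 - al) * (exp w * (1 + (v - w))) <= (1 - al) * exp v) by (apply Rmult_le_compat_l; lra).
  assert (al * (exp w * (1 + (u - w))) + (1 - al) * (exp w * (1 + (v - w))) = exp w) by (unfold w; ring).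
  lra. Qed.

Definition pp (nu : R) := (1 - nu) / (1 + nu).
Definition ellL (nu M dl : R) := pp nu * ln (pp nu) - pp nu * ln dl + 2 / (1 + nu) * ln M.

Lemma t_rpow t nu : 0 < t -> t * rpow t nu = exp (ln t + nu * ln t).
Proof. intros. rewrite rpow_pos_eq by auto. unfold Rpower. rewrite exp_plus, exp_ln; auto. Qed.

Lemma young nu M dl t : 0 <= nu <= 1 -> 0 < M -> 0 < dl -> 0 <= t ->
  M * (t * rpow t nu) / (1 + nu) <= exp (ellL nu M dl) * t ^ 2 / 2 + dl / 2.
Proof. intros Hnu HM Hdl Ht. pose proof (exp_pos (ellL nu M dl)).
  destruct (Req_dec t 0) as [->|Ht0]. { rewrite Rmult_0_l. unfold Rdiv. rewrite Rmult_0_r, Rmult_0_l. nra. }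
  destruct (Req_dec nu 1) as [->|Hn1].
  - unfold ellL, pp. replace ((1 - 1) / (1 + 1)) with 0 by field. replace (2 / (1 + 1)) with 1 by field.
    rewrite !Rmult_0_l, Rmult_1_l, Rminus_0_r, Rplus_0_l, exp_ln by auto.
    rewrite rpow_pos_eq, Rpower_1 by lra. nra.
  - assert (Hn : nu < 1) by lra.
    set (al := (1 + nu) / 2).
    set (u := ellL nu M dl + 2 * ln t - ln (1 + nu)). set (v := ln dl - ln (1 - nu)).
    pose proof (amgm u v al ltac:(unfold al; split; lra)).
    assert (Eu : exp u = exp (ellL nu M dl) * t ^ 2 / (1 + nu)).
    { unfold u. unfold Rminus. rewrite !exp_plus, exp_Ropp, exp_ln by lra.
      replace (2 * ln t) with (ln t + ln t) by ring. rewrite exp_plus, exp_ln by lra. field; lra. }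
    assert (Ev : exp v = dl / (1 - nu)).
    { unfold v. unfold Rminus. rewrite exp_plus, exp_Ropp, !exp_ln by lra. field; lra. }
    assert (Ew : al * u + (1 - al) * v = ln M + (ln t + nu * ln t) - ln (1 + nu)).
    { unfold u, v, al, ellL. unfold pp at 1 3.
      replace (ln (pp nu)) with (ln (1 - nu) - ln (1 + nu)).
      field. lra. unfold pp, Rdiv. rewrite ln_mult, ln_Rinv; try lra. apply Rinv_0_lt_compat; lra. }
    rewrite Ew, Eu, Ev in H0.
    assert (exp (ln M + (ln t + nu * ln t) - ln (1 + nu)) = M * (t * rpow t nu) / (1 + nu)).
    { rewrite t_rpow by lra. unfold Rminus. rewrite !exp_plus, exp_Ropp, !exp_ln by lra.
      field. lra. }
    rewrite H1 in H0. unfold al in H0.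
    replace ((1 + nu) / 2 * (exp (ellL nu M dl) * t ^ 2 / (1 + nu)) + (1 - (1 + nu) / 2) * (dl / (1 - nu)))
      with (exp (ellL nu M dl) * t ^ 2 / 2 + dl / 2) in H0 by (field; lra). auto.
Qed.
Lemma ln_le' x y : 0 < x -> x <= y -> ln x <= ln y.
Proof. intros. destruct H0. left; apply ln_increasing; auto. subst; lra. Qed.
Lemma exp_le' x y : x <= y -> exp x <= exp y.
Proof. intros [H|H]. left; apply exp_increasing; auto. subst; lra. Qed.
Lemma ln_le_inv x y : 0 < x -> 0 < y -> ln x <= ln y -> x <= y.
Proof. intros. destruct H1. left; apply ln_lt_inv; auto. right; apply ln_inv; auto. Qed.

Lemma step_real nu M eps Gd a A' : 0 <= nu <= 1 -> 0 < M -> 0 < eps -> 0 < Gd -> 0 < a -> 0 < A' ->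
  (forall t, 0 <= t -> t * Gd - M * (t * rpow t nu) / (1 + nu) <= (a ^ 2 * Gd ^ 2 - eps * a) / (2 * A')) ->
  ln A' <= 2 * ln a + ellL nu M (eps * a / A').
Proof. intros Hnu HM He HG Ha HA H.
  set (dl := eps * a / A'). assert (Hdl : 0 < dl) by (unfold dl; apply Rdiv_lt_0_compat; nra).
  set (L := exp (ellL nu M dl)). assert (HL : 0 < L) by apply exp_pos.
  set (t := Gd / L). assert (Ht : 0 <= t) by (unfold t; left; apply Rdiv_lt_0_compat; lra).
  pose proof (young nu M dl t Hnu HM Hdl Ht). fold L in H0. specialize (H t Ht).
  assert (E1 : (a ^ 2 * Gd ^ 2 - eps * a) / (2 * A') = a ^ 2 * Gd ^ 2 / (2 * A') - dl / 2) by (unfold dl; field; lra).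
  assert (E2 : t * Gd - L * t ^ 2 / 2 = Gd ^ 2 / (2 * L)) by (unfold t; field; lra).
  assert (Gd ^ 2 / (2 * L) <= a ^ 2 * Gd ^ 2 / (2 * A')) by lra.
  assert (A' <= a ^ 2 * L).
  { apply Rmult_le_reg_r with (Gd ^ 2 / (2 * L * A')). apply Rdiv_lt_0_compat; nra.
    replace (A' * (Gd ^ 2 / (2 * L * A'))) with (Gd ^ 2 / (2 * L)) by (field; lra).
    replace (a ^ 2 * L * (Gd ^ 2 / (2 * L * A'))) with (a ^ 2 * Gd ^ 2 / (2 * A')) by (field; lra). auto. }
  apply ln_le' in H2; [|lra]. rewrite ln_mult in H2 by nra. unfold L in H2. rewrite ln_exp in H2.
  replace (ln (a ^ 2)) with (2 * ln a) in H2. auto. simpl. rewrite Rmult_1_r, ln_mult by lra. ring.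
Qed.

Lemma concave_exp q lam lam' : 0 <= q <= 1 ->
  exp (q * lam) <= exp (q * lam') + q * exp ((q - 1) * lam') * (exp lam - exp lam').
Proof. intros Hq. pose proof (amgm (lam - lam') 0 q Hq). rewrite exp_0 in H.
  pose proof (exp_pos (q * lam')).
  assert (H1 := Rmult_le_compat_l (exp (q * lam')) _ _ (Rlt_le _ _ H0) H).
  rewrite <- exp_plus in H1. replace (q * lam' + (q * (lam - lam') + (1 - q) * 0)) with (q * lam) in H1 by ring.
  replace (exp (q * lam') * (q * exp (lam - lam') + (1 - q) * 1)) with
    (exp (q * lam') + q * (exp (q * lam') * exp (lam - lam')) - q * exp (q * lam')) in H1 by ring.
  rewrite <- exp_plus in H1. replace (q * lam' + (lam - lam')) with (lam + (q - 1) * lam') in H1 by ring.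
  rewrite exp_plus in H1. replace (exp (q * lam')) with (exp ((q - 1) * lam') * exp lam') in H1 |- * at 1
    by (rewrite <- exp_plus; f_equal; ring). nra.
Qed.
Lemma ln_rpow_gen x c : (0 < x) \/ (x = 0 /\ c = 0) -> 0 < rpow x c /\ ln (rpow x c) = c * ln x.
Proof. intros [H|[-> ->]].
  - rewrite rpow_pos_eq by auto. unfold Rpower. split. apply exp_pos. rewrite ln_exp; auto.
  - rewrite rpow_x0, ln_1. split; lra.
Qed.

Section Seq.
Context (nu M eps : R) (Hnu : 0 <= nu <= 1) (HM : 0 < M) (He : 0 < eps).
Definition K0 := pp nu * ln (pp nu) - pp nu * ln eps + 2 / (1 + nu) * ln M.
Definition qq := (1 + nu) / (1 + 3 * nu).
Lemma qq_id : qq * (2 - pp nu) = 1. Proof. unfold qq, pp. field. lra. Qed.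
Lemma qq_bounds : / 2 <= qq <= 1.
Proof. unfold qq. split.
  - apply Rmult_le_reg_r with (1 + 3 * nu). lra. unfold Rdiv. rewrite Rmult_assoc, Rinv_l by lra. lra.
  - apply Rmult_le_reg_r with (1 + 3 * nu). lra. unfold Rdiv. rewrite Rmult_assoc, Rinv_l by lra. lra. Qed.
Lemma pp_lt2 : pp nu <= 1. Proof. unfold pp. apply Rmult_le_reg_r with (1 + nu). lra. unfold Rdiv. rewrite Rmult_assoc, Rinv_l by lra. lra. Qed.

Lemma lna_lb (a1 A1 : R) : 0 < a1 -> 0 < A1 ->
  ln A1 <= 2 * ln a1 + ellL nu M (eps * a1 / A1) ->
  qq * (1 - pp nu) * ln A1 - qq * K0 <= ln a1.
Proof. intros Ha HA H. unfold ellL in H. unfold Rdiv in H. rewrite !ln_mult, ln_Rinv in H; try lra;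
  try (apply Rinv_0_lt_compat; lra); try nra.
  pose proof qq_id. pose proof qq_bounds.
  assert ((1 - pp nu) * ln A1 - K0 <= (2 - pp nu) * ln a1) by (unfold K0; lra).
  assert (H3 := Rmult_le_compat_l qq _ _ ltac:(lra) H2).
  replace (qq * ((2 - pp nu) * ln a1)) with (ln a1) in H3 by (rewrite <- Rmult_assoc, H0; ring). lra.
Qed.
End Seq.
Section Main.
Context (n : nat) (nrm : E n -> R) (sh : E n -> E n)
  (d : E n -> R) (gd : E n -> E n) (f : E n -> R) (D : E n -> E n -> Prop)
  (xs x0 : E n) (eps Theta : R)
  (x v y g : nat -> E n) (beta h a A : nat -> R)
  (Hn : is_norm nrm) (Hs : is_sharp_map nrm sh) (Hp : is_prox nrm sh d gd)
  (Hcase : (convex f /\ (forall z s, D z s <-> is_subgrad f z s)) \/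
   (exists gradf, cont_diff nrm sh f gradf /\ weakly_quasi_convex1 f gradf xs /\
                  (forall z s, D z s <-> s = gradf z)))
  (Hmin : is_minimizer f xs) (Heps : 0 < eps)
  (HU : UAGMsDR sh f D d gd eps x0 x v y g beta h a A)
  (Hg : forall k, g k <> vzero).

Let PS k z := psi d gd f x0 y g a k z.
Let G k := dnorm sh (g k).

Lemma x_0 : x O = x0. Proof. apply HU. Qed.
Lemma v_0 : v O = x0. Proof. apply HU. Qed.
Lemma A_0 : A O = 0. Proof. apply HU. Qed.
Lemma step1 k : (0 <= beta k <= 1 /\
     (forall b, 0 <= b <= 1 ->
        f (vadd (v k) (vscal (beta k) (vsub (x k) (v k)))) <=
        f (vadd (v k) (vscal b (vsub (x k) (v k))))) /\
     y k = vadd (v k) (vscal (beta k) (vsub (x k) (v k))) /\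
     D (y k) (g k) /\ 0 <= pair (g k) (vsub (v k) (y k))).
Proof. apply HU. Qed.
Lemma step2 k : (0 <= h (S k) /\
     (forall t, 0 <= t ->
        f (vsub (y k) (vscal (h (S k)) (sh (g k)))) <= f (vsub (y k) (vscal t (sh (g k))))) /\
     x (S k) = vsub (y k) (vscal (h (S k)) (sh (g k))) /\
     a_equation sh f eps (A k) (y k) (g k) (x (S k)) (a (S k)) /\
     (forall t, a_equation sh f eps (A k) (y k) (g k) (x (S k)) t -> t <= a (S k))).
Proof. apply HU. Qed.
Lemma step3 k : (A (S k) = A k + a (S k) /\
     forall z, psi d gd f x0 y g a (S k) (v (S k)) <= psi d gd f x0 y g a (S k) z).
Proof. apply HU. Qed.

Lemma fy_le_fx k : f (y k) <= f (x k).
Proof. destruct (step1 k) as [_ [Hb [Hy _]]]. rewrite Hy.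
  replace (x k) with (vadd (v k) (vscal 1 (vsub (x k) (v k)))) at 2 by veq. apply Hb; lra. Qed.

Lemma fx_ray k t : 0 <= t -> f (x (S k)) <= f (vsub (y k) (vscal t (sh (g k)))).
Proof. intros Ht. destruct (step2 k) as [_ [Hh [Hx _]]]. rewrite Hx. apply Hh; auto. Qed.

Lemma fx1_le_fy k : f (x (S k)) <= f (y k).
Proof. replace (f (y k)) with (f (vsub (y k) (vscal 0 (sh (g k))))) by (f_equal; veq). apply fx_ray; lra. Qed.

Lemma G_pos k : 0 < G k. Proof. apply (dnorm_pos nrm sh Hn Hs). apply Hg. Qed.

Lemma lower_sub k : f (y k) + pair (g k) (vsub xs (y k)) <= f xs.
Proof. destruct (step1 k) as [_ [_ [_ [HD _]]]]. destruct Hcase as [[Hc HDs]|[gf [_ [Hw HDg]]]].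
  - apply HDs in HD. apply HD.
  - apply HDg in HD. rewrite HD. pose proof (Hw (y k)). rewrite pair_sub_r in *. lra. Qed.

Lemma a_pos k : 0 <= A k -> 0 < a (S k).
Proof. intros HA. destruct (step2 k) as [_ [_ [_ [_ Hmax]]]].
  set (dl := f (y k) - f (x (S k))). assert (Hdl : 0 <= dl) by (unfold dl; pose proof (fx1_le_fy k); lra).
  set (Gq := (dnorm sh (g k)) ^ 2). assert (HG : 0 < Gq) by (unfold Gq; pose proof (G_pos k); unfold G in *; nra).
  set (b := 2 * dl + eps). set (Sq := sqrt (b ^ 2 + 8 * Gq * A k * dl)).
  assert (HS0 : 0 <= Sq) by apply sqrt_pos.
  assert (HS2 : Sq * Sq = b ^ 2 + 8 * Gq * A k * dl) by (apply sqrt_sqrt; assert (0 <= Gq * A k * dl) by (apply Rmult_le_pos; [apply Rmult_le_pos|]; lra); nra).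
  set (t := (b + Sq) / (2 * Gq)).
  assert (Ht : 0 < t) by (unfold t, b; apply Rdiv_lt_0_compat; lra).
  assert (Hu : t * (2 * Gq) = b + Sq) by (unfold t; field; lra).
  assert (HQ : - Gq * t ^ 2 + b * t + 2 * A k * dl = 0).
  { apply Rmult_eq_reg_r with (4 * Gq); [|lra].
    replace ((- Gq * t ^ 2 + b * t + 2 * A k * dl) * (4 * Gq)) with
      (- (t * (2 * Gq)) ^ 2 + 2 * b * (t * (2 * Gq)) + 8 * Gq * A k * dl) by ring.
    rewrite Hu. nra. }
  assert (t <= a (S k)).
  { apply Hmax. split. lra.
    fold Gq. apply Rminus_diag_uniq.
    replace (f (y k) - t ^ 2 / (2 * (A k + t)) * Gq + eps * t / (2 * (A k + t)) - f (x (S k)))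
      with ((- Gq * t ^ 2 + b * t + 2 * A k * dl) / (2 * (A k + t))) by (unfold b, dl; field; lra).
    rewrite HQ. unfold Rdiv. ring. }
  lra. Qed.

Lemma A_nonneg k : 0 <= A k.
Proof. induction k. rewrite A_0; lra. destruct (step3 k) as [HA _]. rewrite HA.
  pose proof (a_pos k IHk). lra. Qed.

Lemma a_pos' k : 0 < a (S k). Proof. apply a_pos, A_nonneg. Qed.

Lemma A_pos k : 0 < A (S k).
Proof. destruct (step3 k) as [HA _]. rewrite HA. pose proof (a_pos' k). pose proof (A_nonneg k). lra. Qed.

Lemma eqn k : A (S k) * f (x (S k)) = A (S k) * f (y k) - a (S k) ^ 2 * (G k) ^ 2 / 2 + eps * a (S k) / 2.
Proof. destruct (step2 k) as [_ [_ [_ [[Hnz He] _]]]]. destruct (step3 k) as [HA _].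
  rewrite HA. rewrite <- He. unfold G. field. auto. Qed.

Lemma psi_S k z : psi d gd f x0 y g a (S k) z =
  psi d gd f x0 y g a k z + a (S k) * (f (y k) + pair (g k) (vsub z (y k))).
Proof. reflexivity. Qed.

Lemma psi_min k z : psi d gd f x0 y g a k (v k) <= psi d gd f x0 y g a k z.
Proof. destruct k.
  - simpl. rewrite v_0, Breg_self. pose proof (Breg_lb nrm sh d gd Hp z x0). pose proof (pow2_ge_0 (nrm (vsub z x0))). lra.
  - apply (step3 k).
Qed.

Lemma psi_quad k z : psi d gd f x0 y g a k (v k) + / 2 * (nrm (vsub z (v k)))^2 <= psi d gd f x0 y g a k z.
Proof. destruct (psi_aff d gd f x0 y g a k) as [c [e He]].
  apply (aff_min nrm sh Hn d gd Hp c e _ He). intros; apply psi_min. Qed.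

Lemma inv k : A k * f (x k) - A k * eps / 2 <= psi d gd f x0 y g a k (v k).
Proof. induction k.
  - rewrite A_0. simpl. rewrite v_0, Breg_self. lra.
  - rewrite psi_S.
    set (z := v (S k)).
    pose proof (psi_quad k z) as Hq.
    set (N := nrm (vsub z (v k))) in *.
    assert (H1 : - (G k * N) <= pair (g k) (vsub z (v k))).
    { pose proof (pair_le_dn nrm sh Hn Hs (g k) (vsub (v k) z)).
      replace (vsub (v k) z) with (vscal (-1) (vsub z (v k))) in H by veq.
      rewrite pair_scal_r, (nrm_scal nrm Hn) in H. replace (Rabs (-1)) with 1 in H by (rewrite Rabs_left; lra).
      unfold G, N. lra. }
    assert (H2 : pair (g k) (vsub z (y k)) = pair (g k) (vsub z (v k)) + pair (g k) (vsub (v k) (y k))).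
    { rewrite <- pair_add_r. f_equal. veq. }
    destruct (step1 k) as [_ [_ [_ [_ H3]]]].
    pose proof (a_pos' k) as Ha. pose proof (A_nonneg k) as HA.
    pose proof (fy_le_fx k) as Hyx.
    pose proof (eqn k) as He. destruct (step3 k) as [HAS _].
    pose proof (G_pos k) as HG.
    assert (H4 : a (S k) * (- (G k * N)) <= a (S k) * pair (g k) (vsub z (v k))) by (apply Rmult_le_compat_l; lra).
    assert (H5 : a (S k) * 0 <= a (S k) * pair (g k) (vsub (v k) (y k))) by (apply Rmult_le_compat_l; lra).
    assert (H6 : A k * f (y k) <= A k * f (x k)) by (apply Rmult_le_compat_l; lra).
    assert (H7 : 0 <= (N - a (S k) * G k) ^ 2) by apply pow2_ge_0.
    rewrite H2. rewrite HAS in He |- *. nra.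
Qed.

Lemma upper k : psi d gd f x0 y g a k xs <= Breg d gd xs x0 + A k * f xs.
Proof. induction k.
  - simpl. rewrite A_0. lra.
  - rewrite psi_S. destruct (step3 k) as [HAS _]. rewrite HAS.
    pose proof (lower_sub k). pose proof (a_pos' k).
    assert (a (S k) * (f (y k) + pair (g k) (vsub xs (y k))) <= a (S k) * f xs) by (apply Rmult_le_compat_l; lra).
    lra.
Qed.

Lemma part1 k : (1 <= k)%nat -> f (x k) - f xs <= Breg d gd xs x0 / A k + eps / 2.
Proof. intros Hk. destruct k. lia. pose proof (A_pos k) as HA.
  pose proof (inv (S k)). pose proof (psi_min (S k) xs). pose proof (upper (S k)).
  assert (A (S k) * (f (x (S k)) - f xs - eps / 2) <= Breg d gd xs x0) by nra.
  apply Rmult_le_reg_l with (A (S k)); auto.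
  replace (A (S k) * (Breg d gd xs x0 / A (S k) + eps / 2)) with (Breg d gd xs x0 + A (S k) * (eps / 2)) by (field; lra).
  nra.
Qed.

Lemma grad_exists p : exists gp, D p gp.
Proof. destruct Hcase as [[Hc HDs]|[gf [_ [_ HDg]]]].
  - destruct (subgrad_exists f Hc p) as [c Hc']. exists c. apply HDs; auto.
  - exists (gf p). apply HDg; auto. Qed.

Lemma grad_bound k nu M (Hh : holder nrm sh D nu M) (Hnu : 0 <= nu <= 1) (HM : 0 <= M) be c gc :
  0 <= c <= be -> D (vsub (y k) (vscal c (sh (g k)))) gc ->
  - pair gc (sh (g k)) <= - G k + M * rpow be nu.
Proof. intros Hc HD. destruct (step1 k) as [_ [_ [_ [HDy _]]]].
  pose proof (Hh _ _ _ _ HDy HD) as H1.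
  replace (vsub (y k) (vsub (y k) (vscal c (sh (g k))))) with (vscal c (sh (g k))) in H1 by veq.
  rewrite (nrm_scal nrm Hn), Rabs_right in H1 by lra.
  pose proof (sh_nrm nrm sh Hs (g k)). pose proof (nrm_nonneg nrm Hn (sh (g k))).
  assert (rpow (c * nrm (sh (g k))) nu <= rpow be nu) by (apply rpow_mono; nra).
  pose proof (dual_le nrm sh Hs (vsub (g k) gc) (sh (g k)) H).
  rewrite pair_sub_l in H3. unfold G, dnorm at 1. unfold dnorm in H3 at 1.
  assert (M * rpow (c * nrm (sh (g k))) nu <= M * rpow be nu) by (apply Rmult_le_compat_l; auto).
  unfold dnorm in H1. lra.
Qed.

Lemma step_bound k nu M (Hh : holder nrm sh D nu M) (Hnu : 0 <= nu <= 1) (HM : 0 <= M) al be :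
  0 <= al < be ->
  f (vsub (y k) (vscal be (sh (g k)))) - f (vsub (y k) (vscal al (sh (g k)))) <= (be - al) * (- G k + M * rpow be nu).
Proof. intros Hab. destruct Hcase as [[Hc HDs]|[gf [[Hfr _] [_ HDg]]]].
  - destruct (subgrad_exists f Hc (vsub (y k) (vscal be (sh (g k))))) as [gb Hgb].
    pose proof (grad_bound k nu M Hh Hnu HM be be gb ltac:(lra) ltac:(apply HDs; auto)).
    pose proof (Hgb (vsub (y k) (vscal al (sh (g k))))).
    replace (vsub (vsub (y k) (vscal al (sh (g k)))) (vsub (y k) (vscal be (sh (g k))))) with
      (vscal (be - al) (sh (g k))) in H0 by veq.
    rewrite pair_scal_r in H0.
    assert ((be - al) * (- pair gb (sh (g k))) <= (be - al) * (- G k + M * rpow be nu)) by (apply Rmult_le_compat_l; lra).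
    lra.
  - pose proof (sh_nrm nrm sh Hs (g k)) as Hs1.
    destruct (MVT_cor2 (fun t => f (vsub (y k) (vscal t (sh (g k)))))
      (fun t => - pair (gf (vsub (y k) (vscal t (sh (g k))))) (sh (g k))) al be ltac:(lra)) as [c [Hc1 Hc2]].
    { intros c _. apply (phi_deriv nrm Hn f gf Hfr (y k) (sh (g k)) Hs1). }
    simpl in Hc1. rewrite Hc1.
    pose proof (grad_bound k nu M Hh Hnu HM be c (gf (vsub (y k) (vscal c (sh (g k))))) ltac:(lra) ltac:(apply HDg; auto)).
    rewrite Rmult_comm. apply Rmult_le_compat_l; lra.
Qed.

Lemma descent k nu M (Hh : holder nrm sh D nu M) (Hnu : 0 <= nu <= 1) (HM : 0 <= M) t : 0 <= t ->
  f (vsub (y k) (vscal t (sh (g k)))) <= f (y k) - t * G k + M * (t * rpow t nu) / (1 + nu).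
Proof. intros Ht. pose proof (descent_real (fun t => f (vsub (y k) (vscal t (sh (g k))))) (G k) M nu t HM Hnu Ht
    (step_bound k nu M Hh Hnu HM)). simpl in H.
  replace (vsub (y k) (vscal 0 (sh (g k)))) with (y k) in H by veq. auto. Qed.

Lemma M_nonneg nu M (Hh : holder nrm sh D nu M) : 0 <= M.
Proof. set (p := vsub (y O) (sh (g O))). destruct (grad_exists p) as [gp Hgp].
  destruct (step1 O) as [_ [_ [_ [HDy _]]]]. pose proof (Hh _ _ _ _ HDy Hgp).
  replace (vsub (y O) p) with (sh (g O)) in H by (unfold p; veq).
  assert (Hsn : 0 < nrm (sh (g O))).
  { pose proof (nrm_nonneg nrm Hn (sh (g O))). destruct H0; auto. symmetry in H0. apply nrm_eq0 in H0; auto.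
    pose proof (G_pos O). unfold G, dnorm in H1. rewrite H0, pair_zero_r in H1. lra. }
  rewrite rpow_pos_eq in H by auto. pose proof (exp_pos (nu * ln (nrm (sh (g O))))).
  pose proof (dnorm_nonneg nrm sh Hn Hs (vsub (g O) gp)). unfold Rpower in H. nra. Qed.

Lemma M_pos nu M (Hh : holder nrm sh D nu M) (Hnu : 0 <= nu <= 1) : 0 < M.
Proof. pose proof (M_nonneg nu M Hh). destruct H; auto. subst. exfalso.
  set (t := (f (y O) - f xs + 1) / G O). pose proof (G_pos O). pose proof (Hmin (y O)).
  assert (Ht : 0 <= t) by (unfold t; left; apply Rdiv_lt_0_compat; lra).
  pose proof (descent O nu 0 Hh Hnu (Rle_refl 0) t Ht).
  pose proof (Hmin (vsub (y O) (vscal t (sh (g O))))).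
  assert (t * G O = f (y O) - f xs + 1) by (unfold t; field; lra).
  assert (0 * (t * rpow t nu) / (1 + nu) = 0) by (field; lra). lra. Qed.

Lemma perstep k nu M (Hh : holder nrm sh D nu M) (Hnu : 0 <= nu <= 1) :
  ln (A (S k)) <= 2 * ln (a (S k)) + ellL nu M (eps * a (S k) / A (S k)).
Proof. pose proof (M_pos nu M Hh Hnu) as HM.
  apply (step_real nu M eps (G k)); auto. apply G_pos. apply a_pos'. apply A_pos.
  intros t Ht. pose proof (descent k nu M Hh Hnu (Rlt_le _ _ HM) t Ht). pose proof (fx_ray k t Ht).
  pose proof (eqn k). pose proof (A_pos k).
  assert (f (y k) - f (x (S k)) = (a (S k) ^ 2 * G k ^ 2 - eps * a (S k)) / (2 * A (S k))).
  { apply Rmult_eq_reg_l with (A (S k)); [|lra]. field_simplify; [|lra]. nra. }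
  lra.
Qed.
Lemma lna_k k nu M (Hh : holder nrm sh D nu M) (Hnu : 0 <= nu <= 1) :
  qq nu * (1 - pp nu) * ln (A (S k)) - qq nu * K0 nu M eps <= ln (a (S k)).
Proof. pose proof (M_pos nu M Hh Hnu). apply lna_lb; auto. apply a_pos'. apply A_pos. apply perstep; auto. Qed.

Lemma B_1 nu M (Hh : holder nrm sh D nu M) (Hnu : 0 <= nu <= 1) :
  exp (- (qq nu * K0 nu M eps)) <= exp (qq nu * ln (A 1%nat)).
Proof. apply exp_le'. pose proof (lna_k O nu M Hh Hnu). destruct (step3 O) as [HA _].
  rewrite A_0, Rplus_0_l in HA. rewrite <- HA in H. pose proof (qq_id nu Hnu).
  assert (qq nu * ln (A 1%nat) = ln (A 1%nat) - qq nu * (1 - pp nu) * ln (A 1%nat)).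
  { replace (ln (A 1%nat) - qq nu * (1 - pp nu) * ln (A 1%nat)) with ((1 - qq nu * (1 - pp nu)) * ln (A 1%nat)) by ring.
    f_equal. nra. }
  lra. Qed.

Lemma B_step k nu M (Hh : holder nrm sh D nu M) (Hnu : 0 <= nu <= 1) : (1 <= k)%nat ->
  exp (qq nu * ln (A k)) + qq nu * exp (- (qq nu * K0 nu M eps)) <= exp (qq nu * ln (A (S k))).
Proof. intros Hk. destruct k. lia. pose proof (A_pos k) as HAk. pose proof (A_pos (S k)) as HAk1.
  pose proof (qq_bounds nu Hnu). pose proof (qq_id nu Hnu).
  pose proof (concave_exp (qq nu) (ln (A (S k))) (ln (A (S (S k)))) ltac:(lra)).
  rewrite !exp_ln in H1 by auto. destruct (step3 (S k)) as [HA _].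
  replace (A (S k) - A (S (S k))) with (- a (S (S k))) in H1 by lra.
  pose proof (lna_k (S k) nu M Hh Hnu). apply exp_le' in H2. rewrite exp_ln in H2 by apply a_pos'.
  pose proof (exp_pos ((qq nu - 1) * ln (A (S (S k))))).
  assert (H4 := Rmult_le_compat_l (exp ((qq nu - 1) * ln (A (S (S k))))) _ _ (Rlt_le _ _ H3) H2).
  rewrite <- exp_plus in H4.
  replace ((qq nu - 1) * ln (A (S (S k))) + (qq nu * (1 - pp nu) * ln (A (S (S k))) - qq nu * K0 nu M eps))
    with (- (qq nu * K0 nu M eps) + (qq nu * (2 - pp nu) - 1) * ln (A (S (S k)))) in H4 by ring.
  rewrite H0, Rminus_diag, Rmult_0_l, Rplus_0_r in H4.
  assert (H5 := Rmult_le_compat_l (qq nu) _ _ ltac:(lra) H4). nra. Qed.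

Lemma B_seq N nu M (Hh : holder nrm sh D nu M) (Hnu : 0 <= nu <= 1) : (1 <= N)%nat ->
  INR N * (qq nu * exp (- (qq nu * K0 nu M eps))) <= exp (qq nu * ln (A N)).
Proof. intros HN. induction N. lia. destruct N.
  - simpl. pose proof (B_1 nu M Hh Hnu). pose proof (qq_bounds nu Hnu).
    pose proof (exp_pos (- (qq nu * K0 nu M eps))). nra.
  - pose proof (B_step (S N) nu M Hh Hnu ltac:(lia)). specialize (IHN ltac:(lia)).
    rewrite S_INR. lra. Qed.
Lemma part2 (HTh : Breg d gd xs x0 <= Theta) nu M N (Hnu : 0 <= nu <= 1) (HMn : is_M_nu nrm sh D nu M)
  (HN : N_bound nu M eps Theta <= INR N) : f (x N) - f xs <= eps.
Proof. destruct HMn as [Hh _]. pose proof (M_pos nu M Hh Hnu) as HM.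
  pose proof (Breg_lb nrm sh d gd Hp xs x0) as HB. pose proof (pow2_ge_0 (nrm (vsub xs x0))).
  destruct (Req_dec Theta 0) as [HT0|HT0].
  - destruct N.
    + rewrite x_0. assert (nrm (vsub xs x0) = 0) by nra. apply (nrm_eq0 nrm Hn) in H0.
      assert (xs = x0). { apply vext. intro i. assert (vsub xs x0 i = vzero i) by (rewrite H0; auto).
        unfold vsub, vzero in H1. lra. } subst. lra.
    + pose proof (part1 (S N) ltac:(lia)). pose proof (A_pos N).
      assert (Breg d gd xs x0 = 0) by lra. rewrite H2 in H0. unfold Rdiv in H0. rewrite Rmult_0_l in H0. lra.
  - assert (HT : 0 < Theta) by lra.
    set (c := (1 - nu) / (1 + 3 * nu)).
    assert (HW : (0 < pp nu) \/ (pp nu = 0 /\ c = 0)).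
    { destruct (Req_dec nu 1) as [->|Hn1]. right. unfold pp, c. split; field.
      left. unfold pp. apply Rdiv_lt_0_compat; lra. }
    destruct (ln_rpow_gen (pp nu) c HW) as [HW1 HW2].
    destruct (ln_rpow_gen (M / eps) (2 / (1 + 3 * nu)) ltac:(left; apply Rdiv_lt_0_compat; lra)) as [HM1 HM2].
    destruct (ln_rpow_gen Theta ((1 + nu) / (1 + 3 * nu)) ltac:(left; auto)) as [HT1 HT2].
    pose proof (exp_pos (((2 + 4 * nu) / (1 + 3 * nu)) * ln 2)) as H2p.
    unfold N_bound in HN. unfold pp in HW1, HW2. fold c in HN.
    set (NB := Rpower 2 ((2 + 4 * nu) / (1 + 3 * nu)) * rpow ((1 - nu) / (1 + nu)) c *
       rpow (M / eps) (2 / (1 + 3 * nu)) * rpow Theta ((1 + nu) / (1 + 3 * nu))) in HN.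
    assert (HNB : 0 < NB) by (unfold NB, Rpower; repeat apply Rmult_lt_0_compat; auto).
    assert (HlnNB : ln NB = ((2 + 4 * nu) / (1 + 3 * nu)) * ln 2 + c * ln ((1 - nu) / (1 + nu)) +
       2 / (1 + 3 * nu) * (ln M - ln eps) + (1 + nu) / (1 + 3 * nu) * ln Theta).
    { unfold NB. rewrite !ln_mult; try (unfold Rpower; repeat apply Rmult_lt_0_compat; auto; fail).
      rewrite ln_Rpower, HW2, HM2, HT2.
      assert (ln (M / eps) = ln M - ln eps) by (unfold Rdiv; rewrite ln_mult, ln_Rinv; try lra; apply Rinv_0_lt_compat; lra).
      rewrite H0. ring. }
    destruct N. { simpl in HN. lra. }
    pose proof (B_seq (S N) nu M Hh Hnu ltac:(lia)) as HBs.
    pose proof (qq_bounds nu Hnu) as Hq. pose proof (qq_id nu Hnu) as Hqi.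
    pose proof (pos_INR N) as HINR. rewrite S_INR in HBs, HN.
    pose proof (exp_pos (- (qq nu * K0 nu M eps))) as Hk.
    apply ln_le' in HBs; [|apply Rmult_lt_0_compat; [lra| apply Rmult_lt_0_compat; lra]].
    rewrite ln_exp, !ln_mult, ln_exp in HBs by (first [apply exp_pos | apply Rmult_lt_0_compat; [lra|apply exp_pos] | lra]).
    assert (H1 : ln NB <= ln (INR N + 1)) by (apply ln_le'; auto).
    assert (H2 : ln (/ 2) <= ln (qq nu)) by (apply ln_le'; lra). rewrite ln_Rinv in H2 by lra.
    pose proof (A_pos N) as HA.
    assert (H3 : ln (A (S N)) = (2 - pp nu) * (qq nu * ln (A (S N)))) by (rewrite <- Rmult_assoc, (Rmult_comm (2 - pp nu)), Hqi; ring).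
    assert (H4 : (2 - pp nu) * (ln NB - ln 2 - qq nu * K0 nu M eps) <= ln (A (S N))).
    { rewrite H3. apply Rmult_le_compat_l. pose proof (pp_lt2 nu Hnu). lra. lra. }
    assert (H5 : (2 - pp nu) * (ln NB - ln 2 - qq nu * K0 nu M eps) = ln 2 + ln Theta - ln eps).
    { rewrite HlnNB. unfold pp, qq, K0, c, pp. field. lra. }
    assert (H6 : ln (2 * Theta / eps) <= ln (A (S N))).
    { unfold Rdiv. rewrite !ln_mult, ln_Rinv; try lra; try nra; try (apply Rinv_0_lt_compat; lra). }
    apply ln_le_inv in H6; [|apply Rdiv_lt_0_compat; lra|auto].
    pose proof (part1 (S N) ltac:(lia)).
    assert (Breg d gd xs x0 / A (S N) <= eps / 2).
    { apply Rmult_le_reg_l with (A (S N)); auto. replace (A (S N) * (Breg d gd xs x0 / A (S N))) with (Breg d gd xs x0) by (field; lra).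
      apply Rmult_le_compat_l with (r := eps / 2) in H6; [|lra].
      replace (eps / 2 * (2 * Theta / eps)) with Theta in H6 by (field; lra). lra. }
    lra.
Qed.

End Main.

Theorem mainTheorem10 (n : nat) (nrm : E n -> R) (sh : E n -> E n)
  (d : E n -> R) (gd : E n -> E n) (f : E n -> R) (D : E n -> E n -> Prop)
  (xs x0 : E n) (eps Theta : R)
  (x v y g : nat -> E n) (beta h a A : nat -> R) :
  is_norm nrm -> is_sharp_map nrm sh -> is_prox nrm sh d gd ->
  ((convex f /\ (forall z s, D z s <-> is_subgrad f z s)) \/
   (exists gradf, cont_diff nrm sh f gradf /\ weakly_quasi_convex1 f gradf xs /\
                  (forall z s, D z s <-> s = gradf z))) ->
  is_minimizer f xs ->
  0 < eps ->
  Breg d gd xs x0 <= Theta ->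
  UAGMsDR sh f D d gd eps x0 x v y g beta h a A ->
  (forall k, g k <> vzero) ->
  (forall k, (1 <= k)%nat -> f (x k) - f xs <= Breg d gd xs x0 / A k + eps / 2) /\
  (forall (nu M : R) (N : nat), 0 <= nu <= 1 -> is_M_nu nrm sh D nu M ->
     N_bound nu M eps Theta <= INR N -> f (x N) - f xs <= eps).
Proof. intros Hn Hs Hp Hc Hm He HT HU Hg. split.
  - intros k Hk. eapply part1; eauto.
  - intros nu M N Hnu HM HN. eapply part2; eauto.
Qed.
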